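(* Let $n\ge2$, let $\alpha_i,\beta_i>0$ ($i=1,\dots,n$) satisfy $\sum_i\alpha_i=\sum_i\beta_i=1$, let $C$ be a convex subset of a real linear space, let $f:C\to\mathbb R$ be strictly convex, and let $x_1,\dots,x_n\in C$. Set $A:=\{i: \alpha_i/\beta_i=\min_k\alpha_k/\beta_k\}$ and $B:=\{i:\alpha_i/\beta_i=\max_k\alpha_k/\beta_k\}$. Then the inequalities $$\min_{k}\left\{\frac{\alpha_k}{\beta_k}\right\}\left(\sum_{i=1}^n\beta_i f(x_i)-f\Big(\sum_{i=1}^n\beta_i x_i\Big)\right)\le \sum_{i=1}^n\alpha_i f(x_i)-f\Big(\sum_{i=1}^n\alpha_i x_i\Big)\le \max_{k}\left\{\frac{\alpha_k}{\beta_k}\right\}\left(\sum_{i=1}^n\beta_i f(x_i)-f\Big(\sum_{i=1}^n\beta_i x_i\Big)\right)$$ hold; equality holds in the left inequality if and only if for every $j\in\{1,\dots,n\}\setminus A$, $$x_j=\sum_{i\in A}\frac{\alpha_i}{\sum_{l\in A}\alpha_l}x_i=\sum_{i=1}^n\alpha_i x_i,$$ or equivalently $x_j=\sum_{i\in A}\frac{\beta_i}{\sum_{l\in A}\beta_l}x_i=\sum_{i=1}^n\beta_i x_i$; and equality holds in the right inequality if and only if for every $j\in\{1,\dots,n\}\setminus B$, $$x_j=\sum_{i\in B}\frac{\alpha_i}{\sum_{l\in B}\alpha_l}x_i=\sum_{i=1}^n\alpha_i x_i,$$ or equivalently $x_j=\sum_{i\in B}\frac{\beta_i}{\sum_{l\in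 B}\beta_l}x_i=\sum_{i=1}^n\beta_i x_i$. *)

(* Defs.v *)
From HB Require Import structures.
From mathcomp Require Import all_boot all_order all_algebra.
Set Implicit Arguments. Unset Strict Implicit. Unset Printing Implicit Defensive.
Import Order.TTheory GRing.Theory Num.Theory.
Local Open Scope ring_scope.

Definition convex_set (R : realFieldType) (V : lmodType R) (C : {pred V}) : Prop :=
  forall (x y : V) (t : R), x \in C -> y \in C -> 0 <= t -> t <= 1 ->
    t *: x + (1 - t) *: y \in C.

Definition strictly_convex_on (R : realFieldType) (V : lmodType R)
    (C : {pred V}) (f : V -> R) : Prop :=
  forall (x y : V) (t : R), x \in C -> y \in C -> x != y -> 0 < t -> t < 1 ->
    f (t *: x + (1 - t) *: y) < t * f x + (1 - t) * f y.

(* min_k r k and max_k r k over a nonempty index set 'I_n (n >= 1);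
   the value for n = 0 is an irrelevant default 0. *)
Definition fmin (R : realFieldType) (n : nat) : ('I_n -> R) -> R :=
  match n with
  | 0 => fun _ => 0
  | n'.+1 => fun r => \big[Num.min/r ord0]_(i < n'.+1) r i
  end.

Definition fmax (R : realFieldType) (n : nat) : ('I_n -> R) -> R :=
  match n with
  | 0 => fun _ => 0
  | n'.+1 => fun r => \big[Num.max/r ord0]_(i < n'.+1) r i
  end.

Definition jgap (R : realFieldType) (V : lmodType R) (n : nat)
    (f : V -> R) (w : 'I_n -> R) (x : 'I_n -> V) : R :=
  \sum_(i < n) w i * f (x i) - f (\sum_(i < n) w i *: x i).

Definition eq_cond (R : realFieldType) (V : lmodType R) (n : nat)
    (S : {set 'I_n}) (w : 'I_n -> R) (x : 'I_n -> V) : Prop :=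
  forall j : 'I_n, j \notin S ->
    x j = \sum_(i in S) (w i / \sum_(l in S) w l) *: x i /\
    x j = \sum_(i < n) w i *: x i.

(* Main.v *)
Require Import Defs.
From HB Require Import structures.
From mathcomp Require Import all_boot all_order all_algebra.
Import Order.TTheory GRing.Theory Num.Theory.
Local Open Scope ring_scope.

Lemma fmin_spec (R : realFieldType) n (r : 'I_n -> R) : (0 < n)%N ->
  (forall i, fmin r <= r i) /\ exists i, r i = fmin r.
Proof.
case: n r => [//|n] r _ /=; split.
  by move=> i; apply: bigmin_le.
have : exists i, \big[Order.min/r ord0]_(i < n.+1) r i = r i.
  apply: (big_ind (fun v => exists i, v = r i)); first by exists ord0.
    by move=> a b [i ->] [j ->]; case: leP => _; [exists i|exists j].
  by move=> i _; exists i.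
by case=> i ->; exists i.
Qed.

Lemma fmax_spec (R : realFieldType) n (r : 'I_n -> R) : (0 < n)%N ->
  (forall i, r i <= fmax r) /\ exists i, r i = fmax r.
Proof.
case: n r => [//|n] r _ /=; split.
  by move=> i; apply: le_bigmax.
have : exists i, \big[Order.max/r ord0]_(i < n.+1) r i = r i.
  apply: (big_ind (fun v => exists i, v = r i)); first by exists ord0.
    by move=> a b [i ->] [j ->]; case: leP => _; [exists j|exists i].
  by move=> i _; exists i.
by case=> i ->; exists i.
Qed.

Section Conv.
Variables (R : realFieldType) (V : lmodType R) (C : {pred V}) (f : V -> R).
Hypotheses (hC : convex_set C) (hf : strictly_convex_on C f).

Lemma conv2 u v t : u \in C -> v \in C -> 0 <= t -> t <= 1 ->
  f (t *: u + (1 - t) *: v) <= t * f u + (1 - t) * f v.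
Proof.
move=> uC vC t0 t1.
have [->|tn0] := eqVneq t 0.
  by rewrite subr0 scale0r add0r mul0r add0r scale1r mul1r.
have [->|tn1] := eqVneq t 1.
  by rewrite subrr scale0r addr0 mul0r addr0 scale1r mul1r.
have [->|uv] := eqVneq u v.
  by rewrite -scalerDl -mulrDl subrKC scale1r mul1r.
apply: ltW; apply: hf => //; first by rewrite lt_neqAle eq_sym tn0.
by rewrite lt_neqAle tn1.
Qed.

Lemma conv2_eq u v t : u \in C -> v \in C -> 0 < t -> t < 1 ->
  f (t *: u + (1 - t) *: v) = t * f u + (1 - t) * f v -> u = v.
Proof.
move=> uC vC t0 t1 E; have [//|uv] := eqVneq u v.
by have := hf _ _ _ uC vC uv t0 t1; rewrite E ltxx.
Qed.

Lemma jensen n : forall (c : R) (y : V) (w : 'I_n -> R) (p : 'I_n -> V),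
  0 <= c -> (forall i, 0 <= w i) -> c + \sum_(i < n) w i = 1 -> y \in C ->
  (forall i, p i \in C) ->
  [/\ c *: y + \sum_(i < n) w i *: p i \in C,
      f (c *: y + \sum_(i < n) w i *: p i) <= c * f y + \sum_(i < n) w i * f (p i) &
      f (c *: y + \sum_(i < n) w i *: p i) = c * f y + \sum_(i < n) w i * f (p i) ->
      (0 < c -> y = c *: y + \sum_(i < n) w i *: p i) /\
      (forall i, 0 < w i -> p i = c *: y + \sum_(i < n) w i *: p i)].
Proof.
elim: n => [|n IH] c y w p c0 w0 s1 yC pC.
  move: s1; rewrite !big_ord0 !addr0 => ->; rewrite scale1r mul1r.
  by split=> // _; split=> // -[].
rewrite !big_ord_recl in s1 *.
set w' := fun i => w (lift ord0 i); set p' := fun i => p (lift ord0 i).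
rewrite -/(w' _) -/(p' _).
have w'0 : forall i, 0 <= w' i by move=> i; apply: w0.
have p'C : forall i, p' i \in C by move=> i; apply: pC.
set s := c + w ord0.
have s0 : 0 <= s by rewrite addr_ge0.
have [sz|sn0] := eqVneq s 0.
  move: sz; rewrite /s; move/eqP; rewrite paddr_eq0 //; case/andP=> /eqP cz /eqP wz.
  rewrite cz wz in s1 *; rewrite !scale0r !mul0r !add0r.
  have s1' : 0 + \sum_(i < n) w' i = 1 by move: s1; rewrite !add0r.
  have [zC le E] := IH 0 y w' p' (lexx 0) w'0 s1' yC p'C.
  move: zC le E; rewrite scale0r mul0r !add0r => zC le E.
  split=> // /E [_ Ew]; split; first by rewrite ltxx.
  move=> i; case: (unliftP ord0 i) => [j ->|->]; last by rewrite wz ltxx.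
  exact: Ew.
have spos : 0 < s by rewrite lt_neqAle eq_sym sn0.
set t := c / s.
have st : s * t = c by rewrite /t mulrC divfK.
have st' : s * (1 - t) = w ord0 by rewrite mulrBr mulr1 st /s addrAC subrr add0r.
have t0 : 0 <= t by rewrite divr_ge0.
have t1 : t <= 1.
  by rewrite /t ler_pdivrMr // mul1r /s lerDl.
set y' := t *: y + (1 - t) *: p ord0.
have y'C : y' \in C by apply: hC.
have sy' : s *: y' = c *: y + w ord0 *: p ord0.
  by rewrite /y' scalerDr !scalerA st st'.
have sfy' : s * (t * f y + (1 - t) * f (p ord0)) = c * f y + w ord0 * f (p ord0).
  by rewrite mulrDr (mulrA s t) (mulrA s (1 - t)) st st'.
have s1' : s + \sum_(i < n) w' i = 1 by rewrite /s -addrA.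
have [zC le E] := IH s y' w' p' s0 w'0 s1' y'C p'C.
rewrite sy' -addrA in zC le E.
have cv := conv2 _ _ _ yC (pC ord0) t0 t1; rewrite -/y' in cv.
have cv' : s * f y' <= c * f y + w ord0 * f (p ord0).
  by rewrite -sfy' ler_pM2l.
split=> //.
  by apply: le_trans le _; rewrite [X in _ <= X]addrA lerD2r.
move=> Eq.
have E1 : s * f y' = c * f y + w ord0 * f (p ord0).
  apply/eqP; rewrite eq_le cv' /=.
  by rewrite -(lerD2r (\sum_(i < n) w' i * f (p' i))) -addrA -Eq.
move: E; rewrite E1 -addrA => /(_ Eq) [Ey' Ew].
have {}Ey' := Ey' spos.
have Ey : f y' = t * f y + (1 - t) * f (p ord0).
  by apply: (mulfI sn0); rewrite E1 sfy'.
have key : (0 < c -> y' = y) /\ (0 < w ord0 -> y' = p ord0).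
  have [cz|cpos] := eqVneq c 0.
    have tz : t = 0 by rewrite /t cz mul0r.
    by split; [rewrite cz ltxx | rewrite /y' tz scale0r add0r subr0 scale1r].
  have [wz|wpos] := eqVneq (w ord0) 0.
    have tz : t = 1 by rewrite /t /s wz addr0 divff.
    by split; [rewrite /y' tz subrr scale0r addr0 scale1r | rewrite wz ltxx].
  have tlt1 : t < 1.
    rewrite lt_neqAle t1 andbT; apply/eqP => tz.
    by move: st'; rewrite tz subrr mulr0 => /esym/eqP; rewrite (negPf wpos).
  have tgt0 : 0 < t by rewrite lt_neqAle t0 andbT eq_sym; apply/eqP=> tz;
    move: st; rewrite tz mulr0 => /esym/eqP; rewrite (negPf cpos).
  have yp := conv2_eq _ _ _ yC (pC ord0) tgt0 tlt1 Ey.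
  have yy : y' = y by rewrite /y' -yp -scalerDl addrC subrK scale1r.
  by split=> _ //; rewrite yy.
split.
  by move=> /(proj1 key) yy; rewrite -Ey' yy.
move=> i; case: (unliftP ord0 i) => [j ->|->].
  exact: Ew.
by move=> /(proj2 key) yy; rewrite -Ey' yy.
Qed.

Lemma partial_avg n (w : 'I_n -> R) (x : 'I_n -> V) (S : {set 'I_n}) :
  \sum_(i < n) w i = 1 ->
  (forall j, j \notin S -> x j = \sum_(i < n) w i *: x i) ->
  \sum_(i in S) w i != 0 ->
  \sum_(i in S) (w i / \sum_(l in S) w l) *: x i = \sum_(i < n) w i *: x i.
Proof.
set z := \sum_(i < n) w i *: x i => s1 hx W0.
have H0 : \sum_(i < n) w i *: (x i - z) = 0.
  under eq_bigr => i _ do rewrite scalerBr.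
  by rewrite sumrB -scaler_suml s1 scale1r subrr.
have H1 : \sum_(i in S) w i *: (x i - z) = 0.
  rewrite big_mkcond -[RHS]H0; apply: eq_bigr => i _.
  by case: ifP => // /negbT /hx ->; rewrite /z subrr scaler0.
move: H1; under eq_bigr => i _ do rewrite scalerBr.
rewrite sumrB -scaler_suml => /eqP; rewrite subr_eq0 => /eqP H1.
under eq_bigr => i _ do rewrite mulrC -scalerA.
by rewrite -scaler_sumr H1 scalerA mulVf // scale1r.
Qed.

Lemma pos_sum n (w : 'I_n -> R) (S : {set 'I_n}) i0 :
  (forall i, 0 < w i) -> i0 \in S -> \sum_(i in S) w i != 0.
Proof.
move=> wp iS; apply: lt0r_neq0; rewrite (bigD1 i0) //=.
by apply: ltr_wpDr; [apply: sumr_ge0 => i _; apply: ltW | apply: wp].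
Qed.

Lemma alg1 (P Q F Y m : R) :
  (m * P + Q - F) - (m * P - m * Y) = (m * Y + Q) - F.
Proof.
by rewrite opprB addrC -!addrA addKr.
Qed.

Lemma core n (a b : 'I_n -> R) (m : R) (S : {set 'I_n}) (x : 'I_n -> V) :
  (forall i, 0 < a i) -> (forall i, 0 < b i) ->
  \sum_(i < n) a i = 1 -> \sum_(i < n) b i = 1 -> 0 < m ->
  (forall i, m * b i <= a i) -> (forall i, (i \in S) = (a i == m * b i)) ->
  (exists i, i \in S) -> (forall i, x i \in C) ->
  [/\ m * jgap f b x <= jgap f a x,
      (m * jgap f b x = jgap f a x <-> eq_cond S a x) &
      (m * jgap f b x = jgap f a x <-> eq_cond S b x)].
Proof.
move=> ap bp sa sb m0 mba hS [i0 i0S] xC.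
set g := fun i => a i - m * b i.
have g0 : forall i, 0 <= g i by move=> i; rewrite subr_ge0.
have gS : forall i, i \in S -> g i = 0 by move=> i; rewrite hS /g => /eqP ->; rewrite subrr.
have gnS : forall i, i \notin S -> 0 < g i.
  move=> i; rewrite hS => ne; rewrite lt_neqAle g0 andbT eq_sym subr_eq0; exact: ne.
set y := \sum_(i < n) b i *: x i; set z := \sum_(i < n) a i *: x i.
have hzv : z = m *: y + \sum_(i < n) g i *: x i.
  under [X in _ = _ + X]eq_bigr => i _ do rewrite scalerBl -scalerA.
  by rewrite sumrB -scaler_sumr addrC subrK.
have hzr : \sum_(i < n) a i * f (x i) =
    m * \sum_(i < n) b i * f (x i) + \sum_(i < n) g i * f (x i).
  under [X in _ = _ + X]eq_bigr => i _ do rewrite mulrBl -mulrA.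
  by rewrite sumrB -mulr_sumr addrC subrK.
have sg : m + \sum_(i < n) g i = 1.
  by rewrite sumrB -mulr_sumr sa sb mulr1 addrC subrK.
have sg' : \sum_(i < n) g i = 1 - m by rewrite -sg addrC addKr.
have yC : y \in C.
  have [+ _ _] := @jensen n 0 (x i0) b x (lexx 0) (fun i => ltW (bp i)) (etrans (add0r _) sb) (xC i0) xC.
  by rewrite scale0r add0r.
have [_ le E] := @jensen n m y g x (ltW m0) g0 sg yC xC.
rewrite -hzv in le E.
have D : jgap f a x - m * jgap f b x = (m * f y + \sum_(i < n) g i * f (x i)) - f z.
  by rewrite /jgap hzr mulrBr -/y -/z alg1.
have EQ : m * jgap f b x = jgap f a x <-> f z = m * f y + \sum_(i < n) g i * f (x i).
  split=> h.
    by apply/eqP; rewrite eq_sym -subr_eq0 -D h subrr.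
  by apply/eqP; rewrite eq_sym -subr_eq0 D h subrr.
have PW : (forall j, j \notin S -> x j = y) -> m * jgap f b x = jgap f a x.
  move=> hx; apply/EQ.
  have Hv : \sum_(i < n) g i *: x i = (1 - m) *: y.
    rewrite -sg' scaler_suml; apply: eq_bigr => i _.
    by case: (boolP (i \in S)) => [/gS ->|/hx ->]; rewrite ?scale0r.
  have Hr : \sum_(i < n) g i * f (x i) = (1 - m) * f y.
    rewrite -sg' mulr_suml; apply: eq_bigr => i _.
    by case: (boolP (i \in S)) => [/gS ->|/hx ->]; rewrite ?mul0r.
  have zy : z = y by rewrite hzv Hv -scalerDl addrC subrK scale1r.
  by rewrite Hr zy -mulrDl addrC subrK mul1r.
have Wa := @pos_sum n a S i0 ap i0S; have Wb := @pos_sum n b S i0 bp i0S.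
split.
- by rewrite -subr_ge0 D subr_ge0.
- split.
    move=> /EQ /E [Ey Ex].
    have hx : forall j, j \notin S -> x j = z by move=> j /gnS /Ex.
    move=> j jS; split; last exact: hx.
    by rewrite (hx j jS) -/z; apply: esym; apply: partial_avg.
  move=> ec; apply: PW.
  have hx : forall j, j \notin S -> x j = z by move=> j /ec [].
  have Hv : \sum_(i < n) g i *: x i = (1 - m) *: z.
    rewrite -sg' scaler_suml; apply: eq_bigr => i _.
    by case: (boolP (i \in S)) => [/gS ->|/hx ->]; rewrite ?scale0r.
  have my : m *: y = m *: z.
    move: hzv; rewrite Hv scalerBl scale1r => hz.
    by apply: (addIr (z - m *: z)); rewrite -hz addrC subrK.
  have yz : y = z by apply: (scalerI (lt0r_neq0 m0)).
  by move=> j /hx ->.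
- split.
    move=> /EQ /E [Ey Ex].
    have {}Ey := Ey m0.
    have hx : forall j, j \notin S -> x j = y by move=> j /gnS /Ex ->.
    move=> j jS; split; last exact: hx.
    by rewrite (hx j jS); apply: esym; apply: partial_avg.
  move=> ec; apply: PW => j /ec [].
  done.
Qed.
End Conv.

Lemma div_eq (R : realFieldType) (a b M : R) : b != 0 -> (a / b == M) = (a == M * b).
Proof. by move=> b0; apply/eqP/eqP => [<-|->]; [rewrite divfK | rewrite mulfK]. Qed.

Lemma inv_eq (R : realFieldType) (a b M : R) : M != 0 -> (a == M * b) = (b == M^-1 * a).
Proof. by move=> M0; apply/eqP/eqP => [->|->]; [rewrite mulKf | rewrite mulVKf]. Qed.

Theorem proposition2p4 (R : realFieldType) (V : lmodType R) (n : nat)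
    (alpha beta : 'I_n -> R) (C : {pred V}) (f : V -> R) (x : 'I_n -> V) :
  (2 <= n)%N ->
  (forall i, 0 < alpha i) -> (forall i, 0 < beta i) ->
  \sum_(i < n) alpha i = 1 -> \sum_(i < n) beta i = 1 ->
  convex_set C -> strictly_convex_on C f ->
  (forall i, x i \in C) ->
  let r := fun i => alpha i / beta i in
  let m := fmin r in
  let M := fmax r in
  let A := [set i | r i == m] in
  let B := [set i | r i == M] in
  [/\ m * jgap f beta x <= jgap f alpha x,
      jgap f alpha x <= M * jgap f beta x,
      (m * jgap f beta x = jgap f alpha x <-> eq_cond A alpha x) /\
      (m * jgap f beta x = jgap f alpha x <-> eq_cond A beta x) &
      (jgap f alpha x = M * jgap f beta x <-> eq_cond B alpha x) /\
      (jgap f alpha x = M * jgap f beta x <-> eq_cond B beta x)].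
Proof.
move=> n2 ap bp sa sb hC hf xC r m M A B.
have n0 : (0 < n)%N by apply: leq_trans n2.
have [mle [i1 ri1]] := @fmin_spec R n r n0.
have [Mge [i2 ri2]] := @fmax_spec R n r n0.
have rpos : forall i, 0 < r i by move=> i; apply: divr_gt0.
have b0 : forall i, beta i != 0 by move=> i; apply: lt0r_neq0.
have m0 : 0 < m by rewrite /m -ri1.
have M0 : 0 < M by rewrite /M -ri2.
have h1 : forall i, m * beta i <= alpha i.
  by move=> i; rewrite -ler_pdivlMr //; exact: mle i.
have h2 : forall i, (i \in A) = (alpha i == m * beta i).
  by move=> i; rewrite inE -div_eq.
have h3 : exists i, i \in A by exists i1; rewrite inE ri1.
have [le1 eqa1 eqb1] := @core R V C f hC hf n alpha beta m A x ap bp sa sb m0 h1 h2 h3 xC.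
have g1 : forall i, M^-1 * alpha i <= beta i.
  by move=> i; rewrite ler_pdivrMl // -ler_pdivrMr //; exact: Mge i.
have g2 : forall i, (i \in B) = (beta i == M^-1 * alpha i).
  by move=> i; rewrite inE div_eq // inv_eq // lt0r_neq0.
have g3 : exists i, i \in B by exists i2; rewrite inE ri2.
have Mi0 : 0 < M^-1 by rewrite invr_gt0.
have [le2 eqa2 eqb2] := @core R V C f hC hf n beta alpha M^-1 B x bp ap sb sa Mi0 g1 g2 g3 xC.
have Meq : forall J K : R, (M^-1 * J = K) <-> (J = M * K).
  have M0n := lt0r_neq0 M0; by move=> J K; split=> [<-|->]; [rewrite mulVKf | rewrite mulKf].
split=> //.
- by rewrite -ler_pdivrMl.
- by split; [split=> [/Meq/eqb2|/eqb2/Meq] | split=> [/Meq/eqa2|/eqa2/Meq]].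
Qed.
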